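(* Let $G$ be a graph on $d+2$ vertices and $k>1$, and suppose there exist a nonzero vector $w \in \mathbf{1}^{\perp}$ and a real number $\gamma$ with $B_G(k) w = \gamma \mathbf{1}$. Then $\det(xJ + B_G(k))$ is the zero polynomial in $x$ if and only if $\det(B_G(k)) = 0$.
   Context: Graphs are finite and simple with vertices labeled $1,\dots,d+2$. $B_G(k)$ is the $(d+2)\times(d+2)$ matrix with $b_{ii}=0$, $b_{ij}=-1$ for non-adjacent $i\neq j$, $b_{ij}=-k^2$ for adjacent $i,j$. $J$ is the all-ones matrix, $\mathbf{1}$ the all-ones vector and $\mathbf{1}^{\perp}$ its orthogonal complement. *)

(* Defs.v *)
From mathcomp Require Import all_boot all_order all_algebra.
Set Implicit Arguments. Unset Strict Implicit. Unset Printing Implicit Defensive.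
Import Order.TTheory GRing.Theory Num.Theory.
Local Open Scope ring_scope.

(* A finite simple graph on vertex set 'I_n (vertices 1..n of the paper are
   the ordinals 0..n-1): a symmetric irreflexive adjacency relation. *)
Definition simple_graph (n : nat) (adj : rel 'I_n) : Prop :=
  (forall i j, adj i j = adj j i) /\ (forall i, adj i i = false).

Definition BG (R : nzRingType) (n : nat) (adj : rel 'I_n) (k : R) : 'M[R]_n :=
  \matrix_(i, j) (if i == j then 0 else if adj i j then - k ^+ 2 else -1).

Definition detxJB (R : comNzRingType) (n : nat) (B : 'M[R]_n) : {poly R} :=
  \det ('X *: const_mx 1 + map_mx polyC B).

(* Main.v *)
Require Import Defs.
From mathcomp Require Import all_boot all_order all_algebra.
Import Order.TTheory GRing.Theory Num.Theory.
Local Open Scope ring_scope.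

Lemma constP (F : fieldType) n : const_mx (1 : {poly F}) = map_mx polyC (const_mx 1 : 'M[F]_n).
Proof. by rewrite map_const_mx. Qed.

Lemma key (F : fieldType) n (B : 'M[F]_n) (w : 'cV[F]_n) (g : F) :
  w != 0 -> const_mx 1 *m w = 0 :> 'M_(n,1) -> B *m w = g *: const_mx 1 ->
  \det B = 0 -> detxJB B = 0.
Proof.
move=> w0 Jw Bw dB; rewrite /detxJB.
have -> : ('X *: const_mx 1 + map_mx polyC B : 'M_n) =
          'X *: map_mx polyC (const_mx 1) + map_mx polyC B by rewrite constP.
have [g0|g0] := eqVneq g 0.
  rewrite -det_tr; apply/eqP/det0P; exists (map_mx polyC w)^T.
    by rewrite trmx_eq0 map_mx_eq0.
  apply: trmx_inj; rewrite trmx_mul !trmxK trmx0 mulmxDl -scalemxAl. rewrite -!map_mxM Jw Bw.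
  by rewrite g0 scale0r !map_mx0 scaler0 addr0.
have [v v0 vB] : exists2 v : 'rV_n, v != 0 & v *m B = 0 by apply/det0P/eqP.
have vJ1 : v *m (const_mx 1 : 'cV[F]_n) = 0.
  suff /eqP : g *: (v *m (const_mx 1 : 'cV[F]_n)) = 0.
    by rewrite scalemx_eq0 (negbTE g0) => /eqP.
  by rewrite scalemxAr -Bw mulmxA vB mul0mx.
have vJ : v *m (const_mx 1 : 'M[F]_n) = 0.
  apply/matrixP => i j; transitivity ((v *m (const_mx 1 : 'cV[F]_n)) i ord0); last by rewrite vJ1 !mxE.
  rewrite !mxE.
  by apply: eq_bigr => l _; rewrite !mxE.
apply/eqP/det0P; exists (map_mx polyC v); first by rewrite map_mx_eq0.
by rewrite mulmxDr -scalemxAr -!map_mxM vJ vB !map_mx0 scaler0 addr0.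
Qed.

Theorem lemma3p5 (R : realFieldType) (d : nat) (adj : rel 'I_(d.+2)) (k : R) :
  simple_graph adj -> 1 < k ->
  (exists (w : 'cV[R]_(d.+2)) (gamma : R),
      w != 0 /\ \sum_i w i ord0 = 0 /\
      BG adj k *m w = gamma *: const_mx 1) ->
  (detxJB (BG adj k) = 0 <-> \det (BG adj k) = 0).
Proof.
move=> _ _ [w [g [w0 [sw Bw]]]]; split.
  move=> h; have := congr1 (horner_eval 0) h.
  rewrite /detxJB -det_map_mx horner_evalE horner0 => <-.
  congr (\det _); apply/matrixP => i j; rewrite !mxE /=.
  by rewrite horner_evalE hornerD hornerM hornerX mul0r add0r hornerC.
apply: key w0 _ Bw; apply/matrixP => i j; rewrite !mxE (ord1 j).
by rewrite -[RHS]sw; apply: eq_bigr => l _; rewrite mxE mul1r.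
Qed.
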